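(* Let $a\neq 0$, $b$ be integers with $\gcd(a,b)=1$, let $k\ge 1$ be an integer, and let $c_1,e_1\in\mathbb{Q}\setminus\{0\}$, $c_0,e_0\in\mathbb{Q}$. Then there is no integer $m>4$ and no $\delta\in\mathbb{Q}\setminus\{0\}$ such that the polynomial identity $$S_{a,b}^k(c_1x+c_0)=e_1D_m(x,\delta)+e_0$$ holds in $\mathbb{Q}[x]$.
   Context: The Bernoulli polynomials $B_n(x)$ are defined by $\frac{t e^{tx}}{e^t-1}=\sum_{n\ge 0}B_n(x)\frac{t^n}{n!}$. For integers $a\neq 0$, $b$ with $\gcd(a,b)=1$ and an integer $k\ge 1$, define the polynomial $$S_{a,b}^k(x):=\frac{a^k}{k+1}\left(B_{k+1}\!\left(x+\frac{b}{a}\right)-B_{k+1}\!\left(\frac{b}{a}\right)\right)\in\mathbb{Q}[x].$$ For a positive integer $m$ and a number $\delta$, the $m$-th Dickson polynomial with parameter $\delta$ is $$D_m(x,\delta)=\sum_{i=0}^{\lfloor m/2\rfloor}\frac{m}{m-i}\binom{m-i}{i}(-\delta)^i x^{m-2i},$$ equivalently characterized by $D_m(z+\delta/z,\delta)=z^m+(\delta/z)^m$. *)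

(* Defs.v *)
From HB Require Import structures.
From mathcomp Require Import all_boot all_order all_algebra.
Set Implicit Arguments. Unset Strict Implicit. Unset Printing Implicit Defensive.
Import Order.TTheory GRing.Theory Num.Theory.
Local Open Scope ring_scope.

(* bern_seq n = [:: B_0; ...; B_n], Bernoulli numbers with B_1 = -1/2
   (the convention of t/(e^t-1)), via B_0 = 1 and
   B_n = -1/(n+1) * \sum_{j<n} C(n+1,j) B_j. *)
Fixpoint bern_seq (n : nat) : seq rat :=
  match n with
  | 0 => [:: 1]
  | n'.+1 => let s := bern_seq n' in
      rcons s (- (n'.+2)%:R^-1 * \sum_(j < n'.+1) ('C(n'.+2, j))%:R * s`_j)
  end.

Definition bernoulli (n : nat) : rat := (bern_seq n)`_n.

Definition bernpoly (n : nat) : {poly rat} :=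
  \sum_(j < n.+1) (('C(n, j))%:R * bernoulli j) *: 'X^(n - j).

Definition Sab (a b : int) (k : nat) : {poly rat} :=
  let r : rat := (b%:~R) / (a%:~R) in
  ((a%:~R : rat) ^+ k / (k.+1)%:R) *:
    ((bernpoly k.+1) \Po ('X + r%:P) - ((bernpoly k.+1).[r])%:P).

Definition dickson (m : nat) (delta : rat) : {poly rat} :=
  \sum_(i < (m./2).+1)
     ((m%:R / (m - i)%:R) * ('C(m - i, i))%:R * (- delta) ^+ i) *: 'X^(m - 2 * i).

(* Main.v *)
Require Import Defs.
From HB Require Import structures.
From mathcomp Require Import all_boot all_order all_algebra.
From mathcomp Require Import ring lra zify.
Import Order.TTheory GRing.Theory Num.Theory.
Local Open Scope ring_scope.


Lemma key_bin (n j t : nat) : (j <= t)%N -> (t <= n)%N ->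
  ('C(n, j) * 'C(n - j, n - t) = 'C(n, t) * 'C(t, j))%N.
Proof.
move=> hjt htn.
have e1 : (n - t = (n - j) - (t - j))%N by lia.
rewrite e1 bin_sub; last by lia.
have h1 := bin_fact (leq_trans hjt htn).
have h2 : ('C(n - j, t - j) * ((t - j)`! * (n - t)`!) = (n - j)`!)%N.
  by rewrite e1 bin_fact //; lia.
have h3 := bin_fact htn.
have h4 := bin_fact hjt.
apply/eqP; rewrite -(eqn_pmul2r (_ : 0 < j`! * ((t - j)`! * (n - t)`!))%N);
  last by rewrite !muln_gt0 !fact_gt0.
apply/eqP.
transitivity (n`!).
  by rewrite -h1 -h2; ring.
by rewrite -h3 -h4; ring.
Qed.

Lemma coef_lin_pow (c h : rat) (p i : nat) :
  ((c *: 'X + h%:P) ^+ p)`_i = c ^+ i * h ^+ (p - i) *+ 'C(p, i).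
Proof.
rewrite addrC exprDn coef_sum.
under eq_bigr => j _ do rewrite coefMn -polyC_exp exprZn coefCM coefZ coefXn.
case: (leqP i p) => hip.
  rewrite (bigD1 (Ordinal (hip : (i < p.+1)%N))) //= eqxx mulr1 big1 ?addr0.
    by rewrite mulrC.
  move=> j /eqP hj.
  have -> : (i == j :> nat) = false by apply/eqP => e; apply: hj; apply: val_inj.
  by rewrite !mulr0 mul0rn.
rewrite bin_small // mulr0n big1 // => j _.
have -> : (i == j :> nat) = false by apply/negbTE; rewrite neq_ltn (leq_trans (ltn_ord j)) ?orbT.
by rewrite !mulr0 mul0rn.
Qed.

Lemma coefQ n (c h : rat) i : (bernpoly n \Po (c *: 'X + h%:P))`_i =
  \sum_(j < n.+1) ('C(n,j)%:R * bernoulli j) * (c ^+ i * h ^+ (n - j - i) *+ 'C(n - j, i)).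
Proof.
rewrite /bernpoly linear_sum coef_sum; apply: eq_bigr => j _.

by rewrite /= comp_polyZ rmorphXn /= comp_polyX coefZ coef_lin_pow.
Qed.

Lemma coefQ_big n (c h : rat) i : (n < i)%N -> (bernpoly n \Po (c *: 'X + h%:P))`_i = 0.
Proof.
move=> hi; rewrite coefQ big1 // => j _.
by rewrite (@bin_small (n - j)) ?mulr0n ?mulr0 //; lia.
Qed.

Lemma coefQ_top n (c h : rat) t : (t <= n)%N ->
  (bernpoly n \Po (c *: 'X + h%:P))`_(n - t) =
  c ^+ (n - t) * 'C(n, t)%:R * \sum_(j < t.+1) 'C(t, j)%:R * bernoulli j * h ^+ (t - j).
Proof.
move=> htn; rewrite coefQ.
rewrite -(big_mkord xpredT (fun j => ('C(n,j)%:R * bernoulli j) * (c ^+ (n - t) * h ^+ (n - j - (n - t)) *+ 'C(n - j, n - t)))).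
rewrite (@big_cat_nat _ _ _ t.+1) //=; try lia.
rewrite [X in _ + X]big_nat_cond [X in _ + X]big1 ?addr0; last first.
  move=> j /andP [/andP [h1 h2] _].
  by rewrite (@bin_small (n - j)) ?mulr0n ?mulr0 //; lia.
rewrite big_mkord mulr_sumr; apply: eq_bigr => j _.
have hj : (j <= t)%N by rewrite -ltnS.
have -> : (n - j - (n - t) = t - j)%N by lia.
have KR : ('C(n,j)%:R * 'C(n-j,n-t)%:R = 'C(n,t)%:R * 'C(t,j)%:R :> rat).
  by rewrite -!natrM key_bin.
rewrite -mulr_natr.
transitivity (c^+(n-t)*h^+(t-j)*bernoulli j*('C(n,j)%:R*'C(n-j,n-t)%:R)); first by ring.
rewrite KR; ring.
Qed.

Lemma binR2 p : ('C(p.+1, 2)%:R : rat) = p.+1%:R * p%:R / 2.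
Proof.
have := bin_ffact p.+1 2; rewrite !ffactnS ffactn0 /= => H.
have : ('C(p.+1, 2) * 2)%:R = (p.+1 * (p * 1))%:R :> rat by rewrite -H.
rewrite !natrM => H2.
have -> : ('C(p.+1, 2)%:R : rat) = 'C(p.+1, 2)%:R * 2%:R / 2 by field.
by rewrite H2; field.
Qed.

Lemma binR4 p : ('C(p.+3, 4)%:R : rat) = p.+3%:R * p.+2%:R * p.+1%:R * p%:R / 24.
Proof.
have := bin_ffact p.+3 4; rewrite !ffactnS ffactn0 /= => H.
have : ('C(p.+3, 4) * 24)%:R = (p.+3 * (p.+2 * (p.+1 * (p * 1))))%:R :> rat by rewrite -H.
rewrite !natrM => H2.
have -> : ('C(p.+3, 4)%:R : rat) = 'C(p.+3, 4)%:R * 24%:R / 24 by field.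
by rewrite H2; field.
Qed.

Lemma coef_dick m d i : (dickson m d)`_i =
  \sum_(l < (m./2).+1) ((m%:R / (m - l)%:R) * ('C(m - l, l))%:R * (- d) ^+ l) * (i == (m - 2 * l)%N)%:R.
Proof.
rewrite /dickson coef_sum; apply: eq_bigr => l _; by rewrite coefZ coefXn.
Qed.

Lemma half_bound m (l : 'I_(m./2).+1) : (2 * l <= m)%N.
Proof. have := ltn_ord l; move: (nat_of_ord l) => x; rewrite -divn2; lia. Qed.

Lemma dick_big m d i : (m < i)%N -> (dickson m d)`_i = 0.
Proof.
move=> hi; rewrite coef_dick big1 // => l _.
have -> : (i == m - 2 * l)%N = false by apply/negbTE; lia.
by rewrite mulr0.
Qed.

Lemma dick_low m d t : (4 < m)%N -> (t <= 4)%N ->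
  (dickson m d)`_(m - t) =
  \sum_(l < 3) ((m%:R / (m - l)%:R) * ('C(m - l, l))%:R * (- d) ^+ l) * (t == (2 * l)%N)%:R.
Proof.
move=> hm ht; rewrite coef_dick.
have h3 : (3 <= (m./2).+1)%N by rewrite -divn2; lia.
set F := fun l : nat => ((m%:R / (m - l)%:R) * ('C(m - l, l))%:R * (- d) ^+ l) * ((m - t)%N == (m - 2 * l)%N)%:R.
rewrite -(big_mkord xpredT F) (@big_cat_nat _ _ _ 3) //=.
rewrite [X in _ + X]big_nat_cond [X in _ + X]big1 ?addr0; last first.
  move=> l /andP [/andP [h1 h2] _]; rewrite /F.
  have -> : ((m - t)%N == m - 2 * l)%N = false by apply/negbTE; move: h2; rewrite -divn2; lia.
  by rewrite mulr0.
rewrite big_mkord; apply: eq_bigr => l _; rewrite /F.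
have hl := ltn_ord l.
have -> : ((m - t)%N == m - 2 * l)%N = (t == 2 * l)%N by apply/eqP/eqP; lia.
by [].
Qed.

Lemma dick_top m d : (0 < m)%N -> (dickson m d)`_m = 1.
Proof.
move=> hm; rewrite coef_dick big_ord_recl /= !subn0 bin0 eqxx.
have -> : (m%:R / m%:R * 1 * (- d) ^+ 0 * 1%:R : rat) = 1.
  by rewrite expr0 !mulr1 divff // pnatr_eq0 -lt0n.
rewrite big1 ?addr0 // => l _.
have := half_bound (lift ord0 l); rewrite /= => hb.
have -> : (m == (m - 2 * bump 0 l)%N) = false by apply/negbTE; move: hb; rewrite /bump /=; lia.
by rewrite mulr0.
Qed.
Lemma Sab_comp a b k c1 c0 :
  let K := ((a%:~R : rat) ^+ k / (k.+1)%:R) in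
  let r : rat := (b%:~R) / (a%:~R) in
  Sab a b k \Po (c1 *: 'X + c0%:P) =
  K *: (bernpoly k.+1 \Po (c1 *: 'X + (c0 + r)%:P)) - (K * (bernpoly k.+1).[r])%:P.
Proof.
move=> K r.
rewrite /Sab comp_polyZ comp_polyB comp_polyC -comp_polyA comp_polyD comp_polyX comp_polyC.
by rewrite -addrA -polyCD scalerBr scale_polyC.
Qed.

Lemma bern_vals : [/\ bernoulli 0 = 1, bernoulli 1 = -(1/2), bernoulli 2 = 1/6,
  bernoulli 3 = 0 & bernoulli 4 = -(1/30)].
Proof.
rewrite /bernoulli /=. rewrite !big_ord_recr !big_ord0 /=.
split; apply/eqP; vm_compute; reflexivity.
Qed.

Lemma lin_comb (A B C k : rat) : A = B -> C = k * (A - B) -> C = 0.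
Proof. by move=> -> ->; rewrite subrr mulr0. Qed.

Theorem lemma4 (a b : int) (k : nat) (c1 c0 e1 e0 : rat) :
  a != 0 -> coprimez a b -> (1 <= k)%N -> c1 != 0 -> e1 != 0 ->
  ~ (exists (m : nat) (delta : rat),
       (4 < m)%N /\ delta != 0 /\
       (Sab a b k) \Po (c1 *: 'X + c0%:P) = e1 *: dickson m delta + e0%:P).
Proof.
move=> ha _ hk hc1 he1 [m [d [hm [hd E]]]].
move: E; rewrite Sab_comp.
set K := (_ / _ : rat).
set h := (c0 + _ : rat).
set Q := bernpoly k.+1 \Po _.
set c := (K * _ : rat) => E.
have hK : K != 0.
  by rewrite /K mulf_neq0 ?expf_neq0 ?intr_eq0 ?invr_eq0 ?pnatr_eq0.
have C i : (0 < i)%N -> K * Q`_i = e1 * (dickson m d)`_i.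
  move=> hi; have := congr1 (fun p : {poly rat} => p`_i) E.
  by rewrite /= !coefD !coefZ !coefN !coefC -[i == 0%N]negbK -lt0n hi /= subr0 addr0.
have hmk : m = k.+1.
  case: (ltngtP m k.+1) => // hmk.
  - have := C k.+1 isT; rewrite dick_big // mulr0.
    have := coefQ_top k.+1 c1 h 0 (leq0n _); rewrite subn0 /Q => ->.
    rewrite big_ord1 /= !bin0 sub0n expr0 !mulr1.

    move=> H0; have : K * c1 ^+ k.+1 != 0 by rewrite mulf_neq0 // expf_neq0.
    by rewrite H0 eqxx.
  - have hm0 : (0 < m)%N by lia.
    have := C m hm0; rewrite dick_top // mulr1.
    by rewrite /Q coefQ_big // mulr0 => /esym/eqP; rewrite (negbTE he1).
subst m.
have T t : (t <= 4)%N -> K * (c1 ^+ (k.+1 - t) * 'C(k.+1, t)%:R *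
    \sum_(j < t.+1) 'C(t, j)%:R * bernoulli j * h ^+ (t - j)) =
  e1 * \sum_(l < 3) ((k.+1%:R / (k.+1 - l)%:R) * ('C(k.+1 - l, l))%:R * (- d) ^+ l) * (t == (2 * l)%N)%:R.
  move=> ht; rewrite -coefQ_top; last by lia.
  by rewrite -dick_low // C //; lia.
have [q hq] : exists q, k = q.+4 by exists (k - 4)%N; lia.
subst k.
have T0 := T 0%N isT; have T1 := T 1%N isT; have T2 := T 2%N isT; have T4 := T 4%N isT.
clear T C E.
move: T0 T1 T2 T4.
rewrite !big_ord_recr !big_ord0 /= !add0r.
case: bern_vals => -> -> -> -> ->.
rewrite !subn0 !subnn !bin0 !binn !bin1.
rewrite (_ : (4 - 1 = 3)%N) // (_ : (4 - 2 = 2)%N) // (_ : (4 - 3 = 1)%N) // (_ : (2 - 1 = 1)%N) //.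
rewrite (_ : 'C(4,2) = 6)%N // (_ : 'C(4,3) = 4)%N //.
rewrite (_ : (q.+1.+4 - 1 = q.+4)%N) ?subn1 // (_ : (q.+1.+4 - 2 = q.+3)%N) ?subn2 //.
rewrite (_ : (q.+1.+4 - 4 = q.+1)%N); last by lia.
rewrite (binR2 q.+4) (binR2 q.+2) (binR4 q.+2).
rewrite (_ : c1 ^+ q.+1.+4 = c1 ^+ q.+1 * c1 ^+ 4); last by rewrite -exprD addn4.
rewrite (_ : c1 ^+ q.+4 = c1 ^+ q.+1 * c1 ^+ 3); last by rewrite -exprD addn3.
rewrite (_ : c1 ^+ q.+3 = c1 ^+ q.+1 * c1 ^+ 2); last by rewrite -exprD addn2.
have hw : c1 ^+ q.+1 != 0 by rewrite expf_neq0.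
move: (c1 ^+ q.+1) hw => w hw.
rewrite -!natr1.
have hx : 0 <= (q%:R : rat) by apply: ler0n.
move: (q%:R : rat) hx => x hx T0 T1 T2 T4.
have H1 : K * w * c1^+3 * (x+5) * (h - 1/2) = 0.
  move/eqP: T1; rewrite -subr_eq0 => /eqP <-.
  by field; repeat (apply/andP; split); apply/negP => /eqP ?; lra.
have hh : h = 1/2.
  have hA : K * w * c1^+3 * (x+5) != 0.
    apply: mulf_neq0; first by rewrite (mulf_neq0 (mulf_neq0 hK hw)) ?expf_neq0.
    by apply/negP => /eqP ?; lra.
  move/eqP: H1; rewrite mulf_eq0 => /orP [/eqP HA|]; first by move: hA; rewrite HA eqxx.
  by rewrite subr_eq0 => /eqP.
rewrite hh in T2 T4.
have He1 : e1 - K * w * c1^+4 = 0.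
  by apply: (@lin_comb _ _ _ (-1) T0); field; repeat (apply/andP; split); apply/negP => /eqP ?; lra.
have {He1} He1 : e1 = K * w * c1^+4 by apply/eqP; rewrite -subr_eq0 He1.
rewrite He1 in T2 T4.
have H2 : K * w * c1^+2 * (x+5) * (24 * (c1^+2 * d) - (x+4)) = 0.
  by apply: (@lin_comb _ _ _ (24) T2); field; repeat (apply/andP; split); apply/negP => /eqP ?; lra.
have Hd : d = (x + 4) / (24 * c1^+2).
  have hA : K * w * c1^+2 * (x+5) != 0.
    apply: mulf_neq0; first by rewrite (mulf_neq0 (mulf_neq0 hK hw)) ?expf_neq0.
    by apply/negP => /eqP ?; lra.
  move/eqP: H2; rewrite mulf_eq0 => /orP [/eqP HA|]; first by move: hA; rewrite HA eqxx.
  rewrite subr_eq0 => /eqP H; rewrite -H; by field; rewrite hc1.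
rewrite Hd in T4.
have H4 : K * w * (x+5) * (x+2) * (x+4) * (2 * x + 1) = 0.
  by apply: (@lin_comb _ _ _ (5760) T4); field; repeat (apply/andP; split); try exact: hc1; apply/negP => /eqP ?; lra.
have : K * w * (x+5) * (x+2) * (x+4) * (2 * x + 1) != 0.
  have hpos (y : rat) : 0 < y -> y != 0 by move=> hy; apply/negP => /eqP ?; lra.
  by rewrite (mulf_neq0 (mulf_neq0 (mulf_neq0 (mulf_neq0 (mulf_neq0 hK hw) _) _) _)) // hpos //; lra.
by rewrite H4 eqxx.
Qed.
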